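(* Consider two states $\Theta=\{0,1\}$. Let $\mathcal{U}$ be the class of state-dependent utility functions $u\colon \mathbb{R}\times\Theta\to\mathbb{R}$ such that for each $\theta\in\Theta$ the function $u_\theta:=u(\cdot,\theta)$ is strictly increasing and weakly concave. Fix numbers $\alpha,\beta,\hat\alpha,\hat\beta>0$ and a nonempty set $W\subseteq\mathbb{R}$. For a belief $\mu\in[0,1]$ (the probability of state $1$), a utility $u\in\mathcal{U}$ and a wealth $w\in\mathbb{R}$, write $s\succeq r$ if $$\mu u_1(w)+(1-\mu)u_0(w)\ \ge\ \mu u_1(w+\alpha)+(1-\mu)u_0(w-\beta),$$ and $s\succeq \hat r$ if $$\mu u_1(w)+(1-\mu)u_0(w)\ \ge\ \mu u_1(w+\hat\alpha)+(1-\mu)u_0(w-\hat\beta).$$ Say that ''the safe option must remain optimal'' if for every $u\in\mathcal{U}$ and every belief $\mu\in[0,1]$: if $s\succeq r$ holds for all $w\in W$, then $s\succeq\hat r$ holds for all $w\in W$. Say that ''the risky option becomes worse'' if $\hat\beta\ge\beta$ and $\frac{\alpha}{\beta}\ge\frac{\hat\alpha}{\hat\beta}$. Then the safe option must remain optimal if and only if the risky option becomes worse.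
   Context: Interpretation: a decision-maker with initial wealth $w$ chooses between a safe action $s$ paying $0$ in both states, and a risky action $r$ paying $\alpha$ in state $1$ and $-\beta$ in state $0$ (or, in the second menu, $\hat r$ paying $\hat\alpha$ in state $1$ and $-\hat\beta$ in state $0$). She is a subjective expected utility maximizer with belief $\mu=\mathbb{P}(\text{state }1)$ and utility of terminal wealth $u_\theta$ in state $\theta$, the same belief and utility being used for both menus. *)

(* Defs.v *)
From Stdlib Require Import Reals.
Open Scope R_scope.

(* States Theta = {0,1} encoded as bool: false = state 0, true = state 1. *)
Definition strictly_increasing (f : R -> R) : Prop :=
  forall x y, x < y -> f x < f y.

Definition weakly_concave (f : R -> R) : Prop :=
  forall x y t, 0 <= t -> t <= 1 ->
    t * f x + (1 - t) * f y <= f (t * x + (1 - t) * y).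

Definition in_U (u : R -> bool -> R) : Prop :=
  forall th : bool,
    strictly_increasing (fun x => u x th) /\ weakly_concave (fun x => u x th).

Definition safe_pref (mu : R) (u : R -> bool -> R) (w a b : R) : Prop :=
  mu * u w true + (1 - mu) * u w false >=
  mu * u (w + a) true + (1 - mu) * u (w - b) false.

Definition safe_must_remain_optimal (alpha beta ah bh : R) (W : R -> Prop) : Prop :=
  forall (u : R -> bool -> R) (mu : R),
    in_U u -> 0 <= mu <= 1 ->
    (forall w, W w -> safe_pref mu u w alpha beta) ->
    (forall w, W w -> safe_pref mu u w ah bh).

Definition risky_becomes_worse (alpha beta ah bh : R) : Prop :=
  bh >= beta /\ alpha / beta >= ah / bh.

(* Main.v *)
Require Import Defs.
From Stdlib Require Import Reals Lra.
Open Scope R_scope.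

Lemma div_le1 a b : 0 < b -> a <= b -> a / b <= 1.
Proof. intros. unfold Rdiv. rewrite <- (Rinv_r b) by lra.
  apply Rmult_le_compat_r; [apply Rlt_le, Rinv_0_lt_compat|]; lra. Qed.
Lemma div_ge1 a b : 0 < b -> b <= a -> 1 <= a / b.
Proof. intros. unfold Rdiv. rewrite <- (Rinv_r b) by lra.
  apply Rmult_le_compat_r; [apply Rlt_le, Rinv_0_lt_compat|]; lra. Qed.

Definition pl (m D k : R) (x : R) : R := m * (x - k) + D * Rmin (x - k) 0.

Lemma pl_inc m D k : 0 < m -> 0 <= D -> strictly_increasing (pl m D k).
Proof.
  intros Hm HD x y Hxy; unfold pl.
  assert (Rmin (x - k) 0 <= Rmin (y - k) 0).
  { unfold Rmin; destruct (Rle_dec (x-k) 0); destruct (Rle_dec (y-k) 0); lra. }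
  assert (m * (x - k) < m * (y - k)) by (apply Rmult_lt_compat_l; lra).
  assert (D * Rmin (x - k) 0 <= D * Rmin (y - k) 0) by (apply Rmult_le_compat_l; lra).
  lra.
Qed.

Lemma pl_conc m D k : 0 <= D -> weakly_concave (pl m D k).
Proof.
  intros HD x y t H0 H1; unfold pl.
  assert (t * Rmin (x - k) 0 + (1 - t) * Rmin (y - k) 0 <= Rmin (t * x + (1 - t) * y - k) 0).
  { apply Rmin_glb.
    - assert (t * Rmin (x - k) 0 <= t * (x - k)) by (apply Rmult_le_compat_l; [lra| apply Rmin_l]).
      assert ((1-t) * Rmin (y - k) 0 <= (1-t) * (y - k)) by (apply Rmult_le_compat_l; [lra| apply Rmin_l]).
      lra.
    - assert (t * Rmin (x - k) 0 <= t * 0) by (apply Rmult_le_compat_l; [lra| apply Rmin_r]).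
      assert ((1-t) * Rmin (y - k) 0 <= (1-t) * 0) by (apply Rmult_le_compat_l; [lra| apply Rmin_r]).
      lra. }
  assert (D * (t * Rmin (x - k) 0 + (1 - t) * Rmin (y - k) 0) <= D * Rmin (t * x + (1 - t) * y - k) 0)
    by (apply Rmult_le_compat_l; lra).
  nra.
Qed.

Lemma lin_inU (a b : R) : 0 < a -> 0 < b -> in_U (fun x th => if th then a * x else b * x).
Proof.
  intros Ha Hb th; destruct th; split; intros x y; simpl.
  - intros; apply Rmult_lt_compat_l; lra.
  - intros; nra.
  - intros; apply Rmult_lt_compat_l; lra.
  - intros; nra.
Qed.

Lemma pl_inU m1 D1 k1 m0 D0 k0 : 0 < m1 -> 0 <= D1 -> 0 < m0 -> 0 <= D0 ->
  in_U (fun x th => if th then pl m1 D1 k1 x else pl m0 D0 k0 x).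
Proof.
  intros; intro th; destruct th; split.
  - apply pl_inc; auto.
  - apply pl_conc; auto.
  - apply pl_inc; auto.
  - apply pl_conc; auto.
Qed.

Lemma cexB alpha beta ah bh w0 : 0 < alpha -> 0 < beta -> 0 < ah -> 0 < bh -> bh < beta ->
  exists u mu, in_U u /\ 0 <= mu <= 1 /\ (forall w, safe_pref mu u w alpha beta) /\
    ~ safe_pref mu u w0 ah bh.
Proof.
  intros Ha Hb Hah Hbh Hlt.
  set (d := Rmin ah ((beta - bh) / 2)).
  assert (Hd1 : d <= ah) by apply Rmin_l.
  assert (Hd2 : d <= (beta - bh)/2) by apply Rmin_r.
  assert (Hd0 : 0 < d) by (unfold d; apply Rmin_glb_lt; lra).
  set (D1 := 2 * alpha * bh / d).
  assert (HD1 : D1 * d = 2 * alpha * bh) by (unfold D1; field; lra).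
  assert (HD1p : 0 <= D1) by (unfold D1; apply Rlt_le; apply Rdiv_lt_0_compat; nra).
  set (D0 := 2 * (beta + D1) * alpha / (beta - bh)).
  assert (HD0 : D0 * ((beta - bh) / 2) = (beta + D1) * alpha) by (unfold D0; field; lra).
  assert (HD0p : 0 <= D0) by (unfold D0; apply Rlt_le; apply Rdiv_lt_0_compat; nra).
  set (k1 := w0 + d). set (k0 := w0 - bh).
  exists (fun (x : R) (th : bool) => if th then pl beta D1 k1 x else pl alpha D0 k0 x), (1/2).
  split; [apply pl_inU; lra|]. split; [lra|]. split.
  - intro w; unfold safe_pref, pl.
    set (g1 := Rmin (w + alpha - k1) 0 - Rmin (w - k1) 0).
    set (g0 := Rmin (w - k0) 0 - Rmin (w - beta - k0) 0).
    assert (D1 * g1 <= D0 * g0).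
    { destruct (Rle_dec k1 w).
      - assert (g1 = 0) by (unfold g1, Rmin; destruct (Rle_dec (w + alpha - k1) 0);
                            destruct (Rle_dec (w - k1) 0); lra).
        assert (0 <= g0) by (unfold g0, Rmin; destruct (Rle_dec (w - k0) 0);
                            destruct (Rle_dec (w - beta - k0) 0); lra).
        rewrite H. assert (0 <= D0 * g0) by (apply Rmult_le_pos; lra). lra.
      - assert (g1 <= alpha) by (unfold g1, Rmin; destruct (Rle_dec (w + alpha - k1) 0);
                            destruct (Rle_dec (w - k1) 0); lra).
        assert ((beta - bh)/2 <= g0) by (unfold g0, k0, k1, Rmin in *; destruct (Rle_dec (w - (w0 - bh)) 0);
                            destruct (Rle_dec (w - beta - (w0 - bh)) 0); lra).
        assert (D1 * g1 <= D1 * alpha) by (apply Rmult_le_compat_l; lra).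
        assert (D0 * ((beta - bh)/2) <= D0 * g0) by (apply Rmult_le_compat_l; lra).
        nra. }
    unfold g1, g0 in H. nra.
  - unfold safe_pref, pl. intro H.
    assert (E1 : Rmin (w0 + ah - k1) 0 = 0) by (unfold k1, Rmin; destruct (Rle_dec _ 0); lra).
    assert (E2 : Rmin (w0 - k1) 0 = - d) by (unfold k1, Rmin; destruct (Rle_dec _ 0); lra).
    assert (E3 : Rmin (w0 - k0) 0 = 0) by (unfold k0, Rmin; destruct (Rle_dec _ 0); lra).
    assert (E4 : Rmin (w0 - bh - k0) 0 = 0) by (unfold k0, Rmin; destruct (Rle_dec _ 0); lra).
    rewrite E1, E2, E3, E4 in H. unfold k1, k0 in H. nra.
Qed.

Lemma chord_right (f : R -> R) w a b : weakly_concave f -> 0 < a -> a <= b ->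
  f (w + b) - f w <= (b / a) * (f (w + a) - f w).
Proof.
  intros Hc Ha Hab.
  pose proof (Hc (w + b) w (a / b)) as H.
  assert (0 <= a / b) by (apply Rlt_le, Rdiv_lt_0_compat; lra).
  assert (a / b <= 1) by (apply div_le1; lra).
  specialize (H H0 H1).
  replace (a / b * (w + b) + (1 - a / b) * w) with (w + a) in H by (field; lra).
  assert (a / b * (f (w + b) - f w) <= f (w + a) - f w) by lra.
  apply Rmult_le_compat_l with (r := b / a) in H2; [|apply Rlt_le, Rdiv_lt_0_compat; lra].
  replace (b / a * (a / b * (f (w + b) - f w))) with (f (w + b) - f w) in H2 by (field; lra).
  exact H2.
Qed.

Lemma chord_left (f : R -> R) w a b : weakly_concave f -> 0 < a -> a <= b ->
  f w - f (w - a) <= (a / b) * (f w - f (w - b)).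
Proof.
  intros Hc Ha Hab.
  pose proof (Hc (w - b) w (a / b)) as H.
  assert (0 <= a / b) by (apply Rlt_le, Rdiv_lt_0_compat; lra).
  assert (a / b <= 1) by (apply div_le1; lra).
  specialize (H H0 H1).
  replace (a / b * (w - b) + (1 - a / b) * w) with (w - a) in H by (field; lra).
  set (t := a / b) in *. set (p := f w) in *. set (q := f (w - b)) in *. set (r := f (w - a)) in *.
  assert (E : t * (p - q) = p - (t * q + (1 - t) * p)) by ring. rewrite E. lra.
Qed.

Theorem theorem1 (alpha beta ah bh : R) (W : R -> Prop) :
  0 < alpha -> 0 < beta -> 0 < ah -> 0 < bh ->
  (exists w, W w) ->
  (safe_must_remain_optimal alpha beta ah bh W <->
   risky_becomes_worse alpha beta ah bh).
Proof.
  intros Ha Hb Hah Hbh [w0 Hw0]. split.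
  - intro Hs. unfold risky_becomes_worse. split.
    + destruct (Rge_dec bh beta) as [|Hn]; auto. exfalso.
      destruct (cexB alpha beta ah bh w0 Ha Hb Hah Hbh (Rnot_ge_lt _ _ Hn)) as (u & mu & Hu & Hmu & Hall & Hnot).
      apply Hnot. apply (Hs u mu Hu Hmu); auto.
    + destruct (Rge_dec (alpha / beta) (ah / bh)) as [|Hn]; auto. exfalso.
      apply Rnot_ge_lt in Hn.
      assert (Hk : alpha * bh < ah * beta).
      { unfold Rdiv in Hn.
        apply Rmult_lt_compat_r with (r := beta * bh) in Hn; [|nra].
        replace (alpha * / beta * (beta * bh)) with (alpha * bh) in Hn by (field; lra).
        replace (ah * / bh * (beta * bh)) with (ah * beta) in Hn by (field; lra).
        exact Hn. }
      assert (Hp : safe_pref (1/2) (fun (x : R) (th : bool) => if th then beta * x else alpha * x) w0 ah bh).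
      { apply (Hs _ (1/2) (lin_inU beta alpha Hb Ha)); [lra| |auto].
        intros w _. unfold safe_pref. lra. }
      unfold safe_pref in Hp. lra.
  - intros [Hbb Hr] u mu Hu Hmu Hall w Hw.
    specialize (Hall w Hw). unfold safe_pref in *.
    destruct (Hu true) as [Hi1 Hc1]. destruct (Hu false) as [Hi0 Hc0].
    set (lam := bh / beta).
    assert (Hlam : 1 <= lam) by (unfold lam; apply div_ge1; lra).
    set (D1 := u (w + alpha) true - u w true).
    assert (HD1 : 0 < D1) by (unfold D1; pose proof (Hi1 w (w+alpha)); simpl in *; lra).
    assert (A1 : u (w + ah) true - u w true <= lam * D1).
    { destruct (Rle_dec ah alpha).
      - assert (u (w + ah) true <= u (w + alpha) true).
        { destruct (Req_dec ah alpha) as [->|]; [lra|].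
          pose proof (Hi1 (w + ah) (w + alpha)); simpl in *; lra. }
        assert (D1 <= lam * D1) by nra. unfold D1 in *; lra.
      - pose proof (chord_right (fun x => u x true) w alpha ah Hc1 Ha ltac:(lra)) as Hcr.
        simpl in Hcr. fold D1 in Hcr.
        assert (ah / alpha <= lam).
        { unfold lam. apply Rge_le in Hr.
          unfold Rdiv in *.
          apply Rmult_le_compat_r with (r := alpha * bh / beta) in Hr; [|apply Rlt_le, Rdiv_lt_0_compat; nra].
          replace (ah * / bh * (alpha * bh / beta)) with (ah * / beta * alpha) in Hr by (field; lra).
          replace (alpha * / beta * (alpha * bh / beta)) with (alpha * alpha * / beta * (bh / beta)) in Hr by (field; lra).
          apply Rmult_le_reg_r with (r := alpha * alpha / beta); [apply Rdiv_lt_0_compat; nra|].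
          unfold Rdiv. replace (ah * / alpha * (alpha * alpha * / beta)) with (ah * / beta * alpha) by (field; lra).
          lra. }
        assert (ah / alpha * D1 <= lam * D1) by (apply Rmult_le_compat_r; lra).
        lra. }
    assert (A0 : lam * (u w false - u (w - beta) false) <= u w false - u (w - bh) false).
    { pose proof (chord_left (fun x => u x false) w beta bh Hc0 Hb ltac:(lra)) as Hcl.
      simpl in Hcl.
      apply Rmult_le_compat_l with (r := lam) in Hcl; [|lra].
      unfold lam in *.
      replace (bh / beta * (beta / bh * (u w false - u (w - bh) false))) with (u w false - u (w - bh) false) in Hcl by (field; lra).
      exact Hcl. }
    assert (mu * D1 <= (1 - mu) * (u w false - u (w - beta) false)) by (unfold D1; lra).
    assert (mu * (u (w + ah) true - u w true) <= mu * (lam * D1)) by (apply Rmult_le_compat_l; lra).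
    assert ((1 - mu) * (lam * (u w false - u (w - beta) false)) <= (1 - mu) * (u w false - u (w - bh) false))
      by (apply Rmult_le_compat_l; lra).
    assert (lam * (mu * D1) <= lam * ((1 - mu) * (u w false - u (w - beta) false))) by (apply Rmult_le_compat_l; lra).
    nra.
Qed.
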